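(* For $n=0,1,2,\ldots$ let $\bar H^{(2)}_n=\sum_{0<j\leqslant n}\frac{1}{(2j-1)^2}$. Then $$\sum_{k=1}^\infty\frac{\binom{2k}k\bar H^{(2)}_k}{(2k+1)16^k}=\frac{\pi^3}{648},\qquad \sum_{k=1}^\infty\frac{\binom{2k}k\bar H^{(2)}_k}{(2k+1)8^k}=\frac{\pi^3}{192\sqrt2},\qquad \sum_{k=1}^\infty\frac{\binom{2k}k\bar H^{(2)}_k}{2k+1}\left(\frac3{16}\right)^k=\frac{\pi^3}{81\sqrt3},$$ and $$\sum_{k=0}^\infty\frac{\binom{2k}k\bar H^{(2)}_k}{(2k+1)(-32)^k}=-\frac{\sqrt2}{24}\log^3 2,\qquad \sum_{k=1}^\infty\frac{\binom{2k}k\bar H^{(2)}_k}{(2k+1)(-12)^k}=-\frac{\sqrt3}{48}\log^3 3,$$ $$\sum_{k=1}^\infty\frac{\binom{2k}k\bar H^{(2)}_k}{(2k+1)(-16)^k}=-\frac13\log^3\frac{\sqrt5+1}2.$$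
   Context: $\log$ denotes the natural logarithm. Note $\bar H^{(2)}_0=0$. *)

(* Defs.v *)
From Stdlib Require Import Reals.
From Coquelicot Require Import Coquelicot.
Open Scope R_scope.

Fixpoint Hbar2 (n : nat) : R :=
  match n with
  | O => 0
  | S m => Hbar2 m + 1 / (2 * INR (S m) - 1) ^ 2
  end.

Definition cbin (k : nat) : R := Binomial.C (2 * k) k.

Definition term (x : R) (k : nat) : R :=
  cbin k * Hbar2 k / (2 * INR k + 1) * x ^ k.

(* Main.v *)
Require Import Defs.
From Stdlib Require Import Reals Lra Lia Psatz Factorial.
From Coquelicot Require Import Coquelicot.
Open Scope R_scope.

Definition bk (k : nat) : R := cbin k / (4 ^ k * (2 * INR k + 1)).
Definition oddc (g : nat -> R) (n : nat) : R :=
  if Nat.even n then 0 else g (Nat.div2 n).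

Lemma oddc_even g k : oddc g (2 * k) = 0.
Proof.
  unfold oddc. replace (Nat.even (2*k)) with true. reflexivity.
  induction k. reflexivity. replace (2 * S k)%nat with (S (S (2*k))) by lia. simpl. auto.
Qed.

Lemma oddc_odd g k : oddc g (2 * k + 1) = g k.
Proof.
  unfold oddc. replace (Nat.even (2*k+1)) with false.
  - f_equal. replace (2*k+1)%nat with (S (2*k)) by lia.
    apply Nat.div2_succ_double.
  - induction k. reflexivity. replace (2 * S k + 1)%nat with (S (S (2*k+1))) by lia. simpl. auto.
Qed.

Lemma fact_pos' n : 0 < INR (fact n).
Proof. apply lt_0_INR. apply lt_O_fact. Qed.

Lemma cbin_fact k : cbin k * INR (fact k) ^ 2 = INR (fact (2 * k)).
Proof.
  unfold cbin, Binomial.C. replace (2 * k - k)%nat with k by lia.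
  pose proof (fact_pos' k). field. lra.
Qed.

Lemma cbin_S k : cbin (S k) * (INR k + 1) ^ 2 = cbin k * (2 * INR k + 1) * (2 * INR k + 2).
Proof.
  pose proof (cbin_fact k) as H0. pose proof (cbin_fact (S k)) as H1.
  replace (2 * S k)%nat with (S (S (2 * k))) in H1 by lia.
  rewrite !fact_simpl in H1. rewrite !mult_INR in H1.
  rewrite <- H0 in H1.
  rewrite !S_INR in H1. rewrite mult_INR in H1. simpl (INR 2) in H1.
  pose proof (fact_pos' k).
  apply Rmult_eq_reg_r with (INR (fact k) ^ 2). 2: apply pow_nonzero; lra.
  nra.
Qed.

Lemma bk_S k : bk (S k) * ((2 * INR k + 3) * (2 * INR k + 2)) = (2 * INR k + 1) ^ 2 * bk k.
Proof.
  unfold bk. rewrite S_INR.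
  pose proof (cbin_S k) as H. pose proof (pos_INR k).
  assert (E : cbin (S k) = cbin k * (2 * INR k + 1) * (2 * INR k + 2) / (INR k + 1) ^ 2).
  { rewrite <- H. field. lra. }
  rewrite E. simpl pow. field. repeat split; try lra. apply pow_nonzero; lra.
Qed.

Lemma bk_0 : bk 0 = 1.
Proof. unfold bk, cbin, Binomial.C. simpl. field. Qed.

Lemma bk_bounds k : 0 < bk k <= 1.
Proof.
  induction k. rewrite bk_0; lra.
  pose proof (bk_S k) as H. pose proof (pos_INR k).
  assert (E : bk (S k) = (2 * INR k + 1) ^ 2 * bk k / ((2 * INR k + 3) * (2 * INR k + 2))).
  { rewrite <- H. field. lra. }
  rewrite E. split.
  - apply Rdiv_lt_0_compat. apply Rmult_lt_0_compat. apply pow_lt; lra. lra. nra.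
  - apply Rmult_le_reg_r with ((2 * INR k + 3) * (2 * INR k + 2)). nra.
    unfold Rdiv. rewrite Rmult_assoc, Rinv_l by nra. nra.
Qed.

Lemma Hbar2_bounds k : 0 <= Hbar2 k <= 3 - 2 / (INR k + 1).
Proof.
  induction k. simpl. lra.
  change (Hbar2 (S k)) with (Hbar2 k + 1 / (2 * INR (S k) - 1) ^ 2). rewrite S_INR. pose proof (pos_INR k).
  assert (0 < / (2 * (INR k + 1) - 1) ^ 2).
  { apply Rinv_0_lt_compat. apply pow_lt. lra. }
  assert (/ (2 * (INR k + 1) - 1) ^ 2 <= 2 / (INR k + 1) - 2 / (INR k + 1 + 1)).
  { replace (2 / (INR k + 1) - 2 / (INR k + 1 + 1)) with (/ ((INR k + 1) * (INR k + 2) / 2)) by (field; lra).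
    apply Rinv_le_contravar. apply Rdiv_lt_0_compat; nra. nra. }
  unfold Rdiv in *. rewrite Rmult_1_l. lra.
Qed.

Lemma const_on (f : R -> R) (t0 : R) :
  (forall t, 0 <= t <= t0 -> is_derive f t 0) ->
  forall t, 0 <= t <= t0 -> f t = f 0.
Proof.
  intros Hd t Ht.
  destruct (MVT_gen f 0 t (fun _ => 0)) as [c [_ Hc]].
  - intros x Hx. apply Hd. unfold Rmin, Rmax in Hx.
    destruct (Rle_dec 0 t); lra.
  - intros x Hx. apply continuity_pt_filterlim.
    apply (ex_derive_continuous f x). eexists. apply Hd.
    unfold Rmin, Rmax in Hx. destruct (Rle_dec 0 t); lra.
  - lra.
Qed.

Lemma radius_ge1 (c : nat -> R) M : (forall n, Rabs (c n) <= M) ->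
  forall y, Rabs y < 1 -> Rbar_lt (Rabs y) (CV_radius c).
Proof.
  intros HM y Hy.
  destruct (CV_radius_bounded c) as [Hub _].
  assert (H1 : Rbar_le 1 (CV_radius c)).
  { apply Hub. exists M. intros n. rewrite pow1, Rmult_1_r. apply HM. }
  destruct (CV_radius c) as [r| |]; simpl in *; lra.
Qed.

Lemma ode_gen (c d : nat -> R) (s M : R) :
  (forall n, Rabs (c n) <= M) ->
  (forall n, INR (S n) * (INR (S (S n)) * c (S (S n))) - s * (INR n) ^ 2 * c n = d n) ->
  forall y, Rabs y < 1 ->
  PSeries (PS_derive (PS_derive c)) y * (1 - s * y ^ 2) - s * y * PSeries (PS_derive c) y
  = PSeries d y.
Proof.
  intros HM Hc y Hy.
  assert (R1 : Rbar_lt (Rabs y) (CV_radius (PS_derive c))).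
  { rewrite CV_radius_derive. eapply radius_ge1; eauto. }
  assert (R2 : Rbar_lt (Rabs y) (CV_radius (PS_derive (PS_derive c)))).
  { rewrite !CV_radius_derive. eapply radius_ge1; eauto. }
  set (D1 := PS_derive c) in *. set (D2 := PS_derive D1) in *.
  assert (E1 := CV_radius_inside _ _ R1). assert (E2 := CV_radius_inside _ _ R2).
  set (e := PS_plus D2 (PS_scal (- s) (PS_plus (PS_incr_1 (PS_incr_1 D2)) (PS_incr_1 D1)))).
  assert (Ee : PSeries e y = PSeries D2 y + (- s) * (y * (y * PSeries D2 y) + y * PSeries D1 y)).
  { unfold e. rewrite PSeries_plus; auto.
    2:{ apply ex_pseries_scal. apply Rmult_comm. apply (ex_pseries_plus (V := R_NormedModule)).
        apply ex_pseries_incr_1, ex_pseries_incr_1, E2. apply ex_pseries_incr_1, E1. }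
    rewrite PSeries_scal, PSeries_plus.
    2: apply (ex_pseries_incr_1 (V := R_NormedModule)), ex_pseries_incr_1, E2.
    2: apply (ex_pseries_incr_1 (V := R_NormedModule)), E1.
    rewrite !PSeries_incr_1. reflexivity. }
  assert (Ed : PSeries e y = PSeries d y).
  { apply PSeries_ext. intros n. rewrite <- Hc. unfold e, D2, D1, PS_plus, PS_scal, PS_incr_1, PS_derive.
    unfold plus, scal, zero; simpl. unfold mult; simpl.
    destruct n as [|[|m]]; cbn -[INR]; rewrite ?S_INR; change (INR 0) with 0; try ring.
    change (match m with 0%nat => 1 | S _ => INR m + 1 end) with (INR (S m)). rewrite S_INR. ring. }
  rewrite <- Ed, Ee. ring.
Qed.

Definition acoef (s : R) := oddc (fun k => s ^ k * bk k).
Definition fcoef (s : R) := oddc (fun k => 6 * s * s ^ k * bk k * Hbar2 k).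

Lemma INR_odd k : INR (2 * k + 1) = 2 * INR k + 1.
Proof. rewrite plus_INR, mult_INR. simpl. ring. Qed.

Lemma parity_cases (P : nat -> Prop) : (forall k, P (2 * k)%nat) -> (forall k, P (2 * k + 1)%nat) -> forall n, P n.
Proof.
  intros He Ho n. destruct (Nat.Even_or_Odd n) as [[k Hk]|[k Hk]]; subst; auto.
Qed.

Lemma bk_S' k : bk (S k) = (2 * INR k + 1) ^ 2 * bk k / ((2 * INR k + 3) * (2 * INR k + 2)).
Proof. rewrite <- bk_S. pose proof (pos_INR k). field. lra. Qed.

Lemma acoef_rec s n :
  INR (S n) * (INR (S (S n)) * acoef s (S (S n))) - s * (INR n) ^ 2 * acoef s n = 0.
Proof.
  revert n. apply parity_cases; intros k; unfold acoef.
  - replace (S (S (2 * k))) with (2 * S k)%nat by lia. rewrite !oddc_even. ring.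
  - replace (S (S (2 * k + 1))) with (2 * S k + 1)%nat by lia. rewrite !oddc_odd.
    replace (S (2 * k + 1)) with (2 * k + 1 + 1)%nat by lia.
    rewrite bk_S'. rewrite !plus_INR, !mult_INR, ?S_INR. pose proof (pos_INR k).
    simpl. field. lra.
Qed.

Lemma fcoef_rec s n : s * s = 1 ->
  INR (S n) * (INR (S (S n)) * fcoef s (S (S n))) - s * (INR n) ^ 2 * fcoef s n = 6 * acoef s n.
Proof.
  intros Hs. revert n. apply parity_cases; intros k; unfold acoef, fcoef.
  - replace (S (S (2 * k))) with (2 * S k)%nat by lia. rewrite !oddc_even. ring.
  - replace (S (S (2 * k + 1))) with (2 * S k + 1)%nat by lia. rewrite !oddc_odd.
    replace (S (2 * k + 1)) with (2 * k + 1 + 1)%nat by lia.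
    rewrite bk_S'. rewrite !plus_INR, !mult_INR, ?S_INR. pose proof (pos_INR k).
    change (Hbar2 (S k)) with (Hbar2 k + 1 / (2 * INR (S k) - 1) ^ 2). rewrite S_INR.
    apply Rminus_diag_uniq.
    transitivity (6 * s ^ k * bk k * (s * s - 1)). simpl. field. lra.
    rewrite Hs. ring.
Qed.

Lemma d_comp (F g : R -> R) x dF dg : is_derive F (g x) dF -> is_derive g x dg ->
  is_derive (fun t => F (g t)) x (dg * dF).
Proof. intros H1 H2. exact (is_derive_comp F g x dF dg H1 H2). Qed.

Lemma d_mult (f g : R -> R) x df dg : is_derive f x df -> is_derive g x dg ->
  is_derive (fun t => f t * g t) x (df * g x + f x * dg).
Proof. intros H1 H2. exact (is_derive_mult f g x df dg H1 H2 Rmult_comm). Qed.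

Lemma d_minus (f g : R -> R) x df dg : is_derive f x df -> is_derive g x dg ->
  is_derive (fun t => f t - g t) x (df - dg).
Proof. intros H1 H2. exact (is_derive_minus f g x df dg H1 H2). Qed.

Lemma d_eq (f : R -> R) x l l' : is_derive f x l -> l = l' -> is_derive f x l'.
Proof. intros H E; subst; auto. Qed.

Lemma abs_sigma s : s * s = 1 -> Rabs s = 1.
Proof.
  intros H. assert (Rabs s * Rabs s = 1) by (rewrite <- Rabs_mult, H; apply Rabs_R1).
  pose proof (Rabs_pos s). nra.
Qed.

Lemma oddc_bound g M : 0 <= M -> (forall k, Rabs (g k) <= M) -> forall n, Rabs (oddc g n) <= M.
Proof.
  intros HM Hg n. unfold oddc. destruct (Nat.even n). rewrite Rabs_R0; auto. auto.
Qed.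

Lemma acoef_bound s : s * s = 1 -> forall n, Rabs (acoef s n) <= 1.
Proof.
  intros Hs. apply oddc_bound. lra. intros k.
  rewrite Rabs_mult, <- RPow_abs, abs_sigma, pow1 by auto.
  pose proof (bk_bounds k). rewrite Rabs_pos_eq; lra.
Qed.

Lemma fcoef_bound s : s * s = 1 -> forall n, Rabs (fcoef s n) <= 18.
Proof.
  intros Hs. apply oddc_bound. lra. intros k.
  rewrite !Rabs_mult, <- RPow_abs, (abs_sigma s Hs), pow1, (Rabs_pos_eq 6) by lra.
  pose proof (bk_bounds k). pose proof (Hbar2_bounds k). pose proof (pos_INR k).
  assert (0 < 2 / (INR k + 1)) by (apply Rdiv_lt_0_compat; lra).
  rewrite (Rabs_pos_eq (bk k)), (Rabs_pos_eq (Hbar2 k)) by lra.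
  nra.
Qed.

Lemma key (s t0 : R) (sf ds : R -> R) :
  s * s = 1 -> 0 <= t0 -> sf 0 = 0 -> ds 0 = 1 ->
  (forall t, 0 <= t <= t0 -> is_derive sf t (ds t) /\ is_derive ds t (- s * sf t) /\
     ds t ^ 2 = 1 - s * sf t ^ 2 /\ Rabs (sf t) < 1) ->
  PSeries (fcoef s) (sf t0) = t0 ^ 3.
Proof.
  intros Hs Ht0 H0 D0 Hall.
  set (a := acoef s). set (f := fcoef s).
  assert (Ra : forall y, Rabs y < 1 -> Rbar_lt (Rabs y) (CV_radius a)).
  { apply radius_ge1 with 1. apply acoef_bound; auto. }
  assert (Rf : forall y, Rabs y < 1 -> Rbar_lt (Rabs y) (CV_radius f)).
  { apply radius_ge1 with 18. apply fcoef_bound; auto. }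
  assert (Step : forall c (d : nat -> R), (forall y, Rabs y < 1 -> Rbar_lt (Rabs y) (CV_radius c)) ->
     (forall y, Rabs y < 1 ->
        PSeries (PS_derive (PS_derive c)) y * (1 - s * y ^ 2) - s * y * PSeries (PS_derive c) y
        = PSeries d y) ->
     forall t, 0 <= t <= t0 ->
       is_derive (fun t => PSeries (PS_derive c) (sf t) * ds t) t (PSeries d (sf t))
       /\ is_derive (fun t => PSeries c (sf t)) t (PSeries (PS_derive c) (sf t) * ds t)).
  { intros c d Rc Ode t Ht. destruct (Hall t Ht) as [Ds [Dds [Eds Hy]]]. split.
    - eapply d_eq. apply d_mult. apply d_comp. apply is_derive_PSeries.
      rewrite CV_radius_derive. now apply Rc. exact Ds. exact Dds.
      rewrite <- Ode by auto. rewrite <- Eds. match goal with |- ?A = ?B => change (@eq R A B) end. ring.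
    - eapply d_eq. apply d_comp. apply is_derive_PSeries. now apply Rc. exact Ds. match goal with |- ?A = ?B => change (@eq R A B) end. ring. }
  assert (HA : forall t, 0 <= t <= t0 -> PSeries a (sf t) = t).
  { assert (OA : forall y, Rabs y < 1 ->
        PSeries (PS_derive (PS_derive a)) y * (1 - s * y ^ 2) - s * y * PSeries (PS_derive a) y
        = PSeries (fun _ => 0) y).
    { intros y Hy. eapply ode_gen. apply acoef_bound; auto. intros n. apply acoef_rec. auto. }
    assert (H1 : forall t, 0 <= t <= t0 -> PSeries (PS_derive a) (sf t) * ds t = 1).
    { intros t Ht.
      rewrite (const_on (fun t => PSeries (PS_derive a) (sf t) * ds t) t0); auto.
      - rewrite H0, D0, PSeries_0. unfold PS_derive, a, acoef, oddc. simpl. rewrite bk_0. ring.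
      - intros u Hu. eapply d_eq. apply (Step a (fun _ => 0) Ra OA u Hu).
        apply PSeries_const_0. }
    intros t Ht.
    assert (E : (fun t => PSeries a (sf t) - t) t = (fun t => PSeries a (sf t) - t) 0).
    { apply (const_on (fun t => PSeries a (sf t) - t) t0); auto. intros u Hu. eapply d_eq. apply d_minus.
      apply (Step a (fun _ => 0) Ra OA u Hu).
      apply is_derive_id. rewrite H1 by auto. unfold one; simpl. ring. }
    cbv beta in E. rewrite H0, PSeries_0 in E.
    assert (a 0%nat = 0) by (unfold a, acoef, oddc; simpl; auto). lra. }
  assert (OF : forall y, Rabs y < 1 ->
        PSeries (PS_derive (PS_derive f)) y * (1 - s * y ^ 2) - s * y * PSeries (PS_derive f) y
        = PSeries (fun n => 6 * a n) y).
  { intros y Hy. eapply ode_gen. apply fcoef_bound; auto. intros n. apply fcoef_rec. all: auto. }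
  assert (S6 : forall y, PSeries (fun n => 6 * a n) y = 6 * PSeries a y).
  { intros y. rewrite <- PSeries_scal. apply PSeries_ext. reflexivity. }
  assert (H1 : forall t, 0 <= t <= t0 -> PSeries (PS_derive f) (sf t) * ds t = 3 * t ^ 2).
  { intros t Ht.
    assert (E : (fun t => PSeries (PS_derive f) (sf t) * ds t - 3 * t ^ 2) t
              = (fun t => PSeries (PS_derive f) (sf t) * ds t - 3 * t ^ 2) 0).
    { apply (const_on (fun t => PSeries (PS_derive f) (sf t) * ds t - 3 * t ^ 2) t0); auto. intros u Hu. eapply d_eq. apply d_minus.
      apply (Step f _ Rf OF u Hu).
      auto_derive; try exact I. reflexivity. rewrite S6, HA by auto. match goal with |- ?A = ?B => change (@eq R A B) end. ring. }
    cbv beta in E. rewrite H0, D0, PSeries_0 in E.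
    assert (PS_derive f 0%nat = 0) by (unfold PS_derive, f, fcoef, oddc; simpl; ring). lra. }
  assert (E : (fun t => PSeries f (sf t) - t ^ 3) t0 = (fun t => PSeries f (sf t) - t ^ 3) 0).
  { apply (const_on (fun t => PSeries f (sf t) - t ^ 3) t0). 2: lra. intros u Hu. eapply d_eq. apply d_minus.
    apply (Step f _ Rf OF u Hu).
    auto_derive; try exact I. reflexivity. rewrite H1 by auto. match goal with |- ?A = ?B => change (@eq R A B) end. ring. }
  cbv beta in E. rewrite H0, PSeries_0 in E.
  assert (f 0%nat = 0) by (unfold f, fcoef, oddc; simpl; auto). lra.
Qed.

Lemma to_series (s y V : R) : s * s = 1 -> Rabs y < 1 -> y <> 0 ->
  PSeries (fcoef s) y = V -> is_series (term (s * y ^ 2 / 4)) (s * V / (6 * y)).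
Proof.
  intros Hs Hy Hy0 HV.
  set (g := fun k => fcoef s (2 * k + 1)).
  assert (Hy2 : Rabs (y ^ 2) < 1).
  { rewrite <- RPow_abs. pose proof (Rabs_pos y). simpl. nra. }
  assert (Eg : ex_pseries g (y ^ 2)).
  { apply CV_radius_inside. apply radius_ge1 with 18; auto. intros n. apply fcoef_bound; auto. }
  assert (Ez : is_pseries (fun n => fcoef s (2 * n)) (y ^ 2) 0).
  { apply is_pseries_ext with (fun _ => 0).
    { intros n. unfold fcoef. rewrite oddc_even. auto. }
    assert (Z : ex_pseries (fun _ : nat => 0) (y ^ 2)).
    { apply CV_radius_inside. rewrite CV_radius_const_0. simpl. auto. }
    apply PSeries_correct in Z. rewrite PSeries_const_0 in Z. exact Z. }
  assert (Og := PSeries_correct _ _ Eg).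
  assert (All := is_pseries_odd_even _ _ _ _ Ez Og). fold g in All.
  apply is_pseries_unique in All. rewrite HV in All.
  assert (Hs0 : s <> 0) by (intro; subst; lra).
  assert (Hinv : / (6 * s) = s / 6).
  { rewrite <- (Rmult_1_l (/ (6 * s))), <- Hs. field. auto. }
  apply (is_series_scal (/ (6 * s))) in Og.
  eapply is_series_ext. 2: { replace (s * V / (6 * y)) with (scal (/ (6 * s)) (PSeries g (y ^ 2))).
     exact Og. unfold scal; simpl; unfold mult; simpl. rewrite All. match goal with |- ?A = ?B => change (@eq R A B) end. change (y*(y*1)) with (y^2). rewrite Hinv. field. auto. }
  intros n. unfold scal; simpl; unfold mult; simpl. rewrite pow_n_pow. rewrite Hinv.
  change (y * (y * 1)) with (y ^ 2). set (Y := y ^ 2).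
  unfold g, fcoef. rewrite oddc_odd. unfold term, bk.
  unfold Rdiv. rewrite !Rpow_mult_distr, pow_inv. pose proof (pos_INR n).
  assert (4 ^ n <> 0) by (apply pow_nonzero; lra).
  apply Rminus_diag_uniq.
  transitivity (cbin n * Hbar2 n * Y ^ n * s ^ n * / (4 ^ n * (2 * INR n + 1)) * (s * s - 1)).
  field. split; auto; lra. rewrite Hs. ring.
Qed.

Lemma sin_case t0 : 0 <= t0 < PI / 2 -> PSeries (fcoef 1) (sin t0) = t0 ^ 3.
Proof.
  intros Ht0. pose proof PI_RGT_0.
  assert (Hs1 : sin t0 < 1).
  { rewrite <- sin_PI2. apply sin_increasing_1; lra. }
  apply (key 1 t0 sin cos); try lra; auto using sin_0, cos_0.
  intros t Ht. split; [|split; [|split]].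
  - apply is_derive_sin.
  - apply (d_eq cos t (- sin t)). apply is_derive_cos. lra.
  - pose proof (sin2_cos2 t). unfold Rsqr in *. simpl. lra.
  - assert (0 <= sin t) by (apply sin_ge_0; lra).
    assert (sin t <= sin t0) by (apply sin_incr_1; lra).
    rewrite Rabs_pos_eq; lra.
Qed.

Lemma sinh_case t0 : 0 <= t0 -> sinh t0 < 1 -> PSeries (fcoef (-1)) (sinh t0) = t0 ^ 3.
Proof.
  intros Ht0 Hs1.
  apply (key (-1) t0 sinh cosh); try lra; auto using sinh_0, cosh_0.
  intros t Ht. split; [|split; [|split]].
  - apply is_derive_Reals, derivable_pt_lim_sinh.
  - apply (d_eq cosh t (sinh t)). apply is_derive_Reals, derivable_pt_lim_cosh. lra.
  - unfold sinh, cosh. rewrite exp_Ropp. pose proof (exp_pos t). field. lra.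
  - assert (0 <= sinh t).
    { rewrite <- sinh_0. destruct (Req_dec t 0). subst; lra. left; apply sinh_lt; lra. }
    assert (sinh t <= sinh t0).
    { destruct (Req_dec t t0). subst; lra. left; apply sinh_lt; lra. }
    rewrite Rabs_pos_eq; lra.
Qed.

Lemma final s t0 y x l : s * s = 1 -> Rabs y < 1 -> y <> 0 -> PSeries (fcoef s) y = t0 ^ 3 ->
  x = s * y ^ 2 / 4 -> l = s * t0 ^ 3 / (6 * y) -> is_series (fun k => term x (S k)) l.
Proof.
  intros Hs Hy Hy0 HP Hx Hl. apply is_series_incr_1.
  match goal with |- is_series _ ?v => replace v with (s * t0 ^ 3 / (6 * y)) end.
  - rewrite Hx, <- HP. apply to_series; auto.
  - unfold plus; simpl. unfold term; simpl. rewrite Hl. lra.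
Qed.

Lemma exp_half_ln a : 0 < a -> exp (ln a / 2) = sqrt a.
Proof.
  intros Ha. pose proof (sqrt_lt_R0 a Ha).
  assert (ln a = ln (sqrt a) + ln (sqrt a)).
  { rewrite <- ln_mult by auto. rewrite sqrt_sqrt; lra. }
  rewrite H0. replace ((ln (sqrt a) + ln (sqrt a)) / 2) with (ln (sqrt a)) by field.
  apply exp_ln; auto.
Qed.

Lemma inv_sqrt a : 0 < a -> / sqrt a = sqrt a / a.
Proof.
  intros Ha. pose proof (sqrt_lt_R0 a Ha). pose proof (sqrt_sqrt a (Rlt_le _ _ Ha)).
  apply Rmult_eq_reg_l with (sqrt a). 2: lra.
  rewrite Rinv_r by lra. unfold Rdiv. rewrite <- Rmult_assoc, H0. field. lra.
Qed.

Lemma sinh_val t0 E : exp t0 = E -> sinh t0 = (E - / E) / 2.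
Proof. intros H. unfold sinh. rewrite exp_Ropp, H. reflexivity. Qed.

Lemma c1 : is_series (fun k => term (/ 16) (S k)) (PI ^ 3 / 648).
Proof.
  pose proof PI_RGT_0.
  assert (HP := sin_case (PI / 6) ltac:(lra)). rewrite sin_PI6 in HP.
  apply (final 1 (PI / 6) (1 / 2)); auto; try lra.
  rewrite Rabs_pos_eq; lra.
Qed.

Lemma c2 : is_series (fun k => term (/ 8) (S k)) (PI ^ 3 / (192 * sqrt 2)).
Proof.
  pose proof PI_RGT_0.
  assert (HP := sin_case (PI / 4) ltac:(lra)). rewrite sin_PI4 in HP.
  pose proof (sqrt_lt_R0 2 ltac:(lra)). pose proof (sqrt_sqrt 2 ltac:(lra)).
  set (r := sqrt 2) in *.
  assert (E : 1 / r = r / 2) by (unfold Rdiv; rewrite Rmult_1_l; apply inv_sqrt; lra).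
  rewrite E in HP.
  apply (final 1 (PI / 4) (r / 2)); auto; try lra.
  rewrite Rabs_pos_eq; nra. field. lra.
Qed.

Lemma c3 : is_series (fun k => term (3 / 16) (S k)) (PI ^ 3 / (81 * sqrt 3)).
Proof.
  pose proof PI_RGT_0.
  assert (HP := sin_case (PI / 3) ltac:(lra)). rewrite sin_PI3 in HP.
  pose proof (sqrt_lt_R0 3 ltac:(lra)). pose proof (sqrt_sqrt 3 ltac:(lra)).
  set (r := sqrt 3) in *.
  apply (final 1 (PI / 3) (r / 2)); auto; try lra.
  rewrite Rabs_pos_eq; nra.
  field. lra.
Qed.

Lemma ln_pos a : 1 < a -> 0 < ln a.
Proof. intros H. rewrite <- ln_1. apply ln_increasing; lra. Qed.

Lemma c4 : is_series (fun k => term (/ (-32)) k) (- (sqrt 2 / 24) * (ln 2) ^ 3).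
Proof.
  pose proof (sqrt_lt_R0 2 ltac:(lra)). pose proof (sqrt_sqrt 2 ltac:(lra)).
  pose proof (ln_pos 2 ltac:(lra)).
  assert (Ex := exp_half_ln 2 ltac:(lra)).
  assert (Hy := sinh_val _ _ Ex). rewrite inv_sqrt in Hy by lra.
  set (r := sqrt 2) in *. set (L := ln 2) in *. clearbody r L.
  replace ((r - r / 2) / 2) with (r / 4) in Hy by field.
  assert (HP := sinh_case (L / 2) ltac:(lra) ltac:(rewrite Hy; nra)). rewrite Hy in HP.
  assert (F := to_series (-1) (r / 4) ((L / 2) ^ 3) ltac:(lra) ltac:(rewrite Rabs_pos_eq; nra) ltac:(lra) HP).
  assert (Ex2 : / (-32) = -1 * (r / 4) ^ 2 / 4).
  { replace ((r / 4) ^ 2) with (r * r / 16) by field. rewrite H0. field. }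
  rewrite Ex2.
  replace (- (r / 24) * L ^ 3) with (-1 * (L / 2) ^ 3 / (6 * (r / 4))). exact F.
  transitivity (- L ^ 3 * 2 / (24 * r)). field. lra. rewrite <- H0 at 1. field. lra.
Qed.

Lemma c5 : is_series (fun k => term (/ (-12)) (S k)) (- (sqrt 3 / 48) * (ln 3) ^ 3).
Proof.
  pose proof (sqrt_lt_R0 3 ltac:(lra)). pose proof (sqrt_sqrt 3 ltac:(lra)).
  pose proof (ln_pos 3 ltac:(lra)).
  assert (Ex := exp_half_ln 3 ltac:(lra)).
  assert (Hy := sinh_val _ _ Ex). rewrite inv_sqrt in Hy by lra.
  set (r := sqrt 3) in *. set (L := ln 3) in *. clearbody r L.
  replace ((r - r / 3) / 2) with (r / 3) in Hy by field.
  assert (HP := sinh_case (L / 2) ltac:(lra) ltac:(rewrite Hy; nra)). rewrite Hy in HP.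
  apply (final (-1) (L / 2) (r / 3)); auto; try lra.
  - rewrite Rabs_pos_eq; nra.
  - transitivity (- L ^ 3 * 3 / (48 * r)). rewrite <- H0 at 1. field. lra. field. lra.
Qed.

Lemma c6 : is_series (fun k => term (/ (-16)) (S k))
    (- (1 / 3) * (ln ((sqrt 5 + 1) / 2)) ^ 3).
Proof.
  pose proof (sqrt_lt_R0 5 ltac:(lra)). pose proof (sqrt_sqrt 5 ltac:(lra)).
  set (r := sqrt 5) in *. clearbody r.
  assert (Hr1 : 1 < r) by nra.
  assert (HL := ln_pos ((r + 1) / 2) ltac:(lra)).
  assert (Ex := exp_ln ((r + 1) / 2) ltac:(lra)).
  assert (Hy := sinh_val _ _ Ex).
  assert (Iv : / ((r + 1) / 2) = (r - 1) / 2).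
  { apply (Rmult_eq_reg_l ((r + 1) / 2)). rewrite Rinv_r by lra. nra. lra. }
  rewrite Iv in Hy. replace (((r + 1) / 2 - (r - 1) / 2) / 2) with (1 / 2) in Hy by field.
  set (L := ln ((r + 1) / 2)) in *. clearbody L.
  assert (HP := sinh_case L ltac:(lra) ltac:(rewrite Hy; lra)). rewrite Hy in HP.
  apply (final (-1) L (1 / 2)); auto; try lra.
  all: try (rewrite Rabs_pos_eq; lra). all: field.
Qed.

Theorem corollary1p1 :
  is_series (fun k => term (/ 16) (S k)) (PI ^ 3 / 648) /\
  is_series (fun k => term (/ 8) (S k)) (PI ^ 3 / (192 * sqrt 2)) /\
  is_series (fun k => term (3 / 16) (S k)) (PI ^ 3 / (81 * sqrt 3)) /\
  is_series (fun k => term (/ (-32)) k) (- (sqrt 2 / 24) * (ln 2) ^ 3) /\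
  is_series (fun k => term (/ (-12)) (S k)) (- (sqrt 3 / 48) * (ln 3) ^ 3) /\
  is_series (fun k => term (/ (-16)) (S k))
    (- (1 / 3) * (ln ((sqrt 5 + 1) / 2)) ^ 3).
Proof.
  split. exact c1. split. exact c2. split. exact c3. split. exact c4. split. exact c5. exact c6.
Qed.
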